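(* Let $M$ be a matroid on a finite set $E$ and let $P=\{K_1,K_2,\dots,K_t\}$ (with the $K_i$ distinct) be a partition of $\cup\mathcal{B}(M)$. Then $|B\cap K_i|=1$ for every $B\in\mathcal{B}(M)$ and every $i\in\{1,\dots,t\}$ if and only if $\mathcal{B}(M)=\{\{b_1,b_2,\dots,b_t\}: b_i\in K_i,\ 1\le i\le t\}$.
   Context: $\mathcal{B}(M)$ denotes the family of bases of $M$ and $\cup\mathcal{B}(M)$ the union of all bases. A partition of a set $U$ is a family of nonempty pairwise disjoint subsets of $U$ whose union is $U$. *)

(* Defs.v *)
From mathcomp Require Import all_boot.
Set Implicit Arguments. Unset Strict Implicit. Unset Printing Implicit Defensive.

Definition is_matroid_bases (T : finType) (E : {set T}) (bases : {set {set T}}) : Prop :=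
  [/\ bases != set0,
      (forall B, B \in bases -> B \subset E) &
      (forall B1 B2, B1 \in bases -> B2 \in bases ->
         forall x, x \in B1 :\: B2 ->
         exists2 y, y \in B2 :\: B1 & (y |: (B1 :\ x)) \in bases)].

Definition union_bases (T : finType) (bases : {set {set T}}) : {set T} :=
  \bigcup_(B in bases) B.

Definition transversals (T : finType) (t : nat) (K : 'I_t -> {set T}) : {set {set T}} :=
  [set B : {set T} | [exists b : {ffun 'I_t -> T},
      [forall i, b i \in K i] && (B == [set b i | i : 'I_t])]].

(* Main.v *)
Require Import Defs.
From mathcomp Require Import all_boot.

Lemma card1_uniq {T : finType} {A : {set T}} {x y} :
  #|A| = 1 -> x \in A -> y \in A -> x = y.
Proof. by move/eqP/cards1P=> [z ->]; rewrite !in_set1 => /eqP-> /eqP->. Qed.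

Theorem theorem9 (T : finType) (E : {set T}) (bases : {set {set T}})
  (t : nat) (K : 'I_t -> {set T}) :
  is_matroid_bases E bases ->
  injective K ->
  partition [set K i | i : 'I_t] (union_bases bases) ->
  (forall B, B \in bases -> forall i : 'I_t, #|B :&: K i| = 1) <->
  bases = transversals K.
Proof.
move=> [Hne _ Hex] Kinj /and3P [/eqP Hcov Htriv _].
rewrite cover_imset in Hcov.
have Hdisj : forall i j x, x \in K i -> x \in K j -> i = j.
  move=> i j x xi xj; case: (eqVneq i j) => // ij; exfalso.
  move/trivIsetP: Htriv => /(_ (K i) (K j)).
  rewrite !imset_f // => /(_ isT isT).
  have -> : K i != K j by apply/eqP=> /Kinj /eqP; rewrite (negbTE ij).
  by move=> /(_ isT) /disjointFr /(_ xi); rewrite xj.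
have HUK : forall x, x \in union_bases bases -> exists i, x \in K i.
  by move=> x; rewrite -Hcov => /bigcupP [i _ xi]; exists i.
have HKU : forall i x, x \in K i -> x \in union_bases bases.
  by move=> i x xi; rewrite -Hcov; apply/bigcupP; exists i.
have HBU : forall B x, B \in bases -> x \in B -> x \in union_bases bases.
  by move=> B x HB xB; apply/bigcupP; exists B.
split.
- move=> H1; apply/setP => B; apply/idP/idP.
  + move=> HB.
    have Hi : forall i, exists x, x \in B :&: K i.
      move=> i; have := H1 B HB i => /eqP/cards1P [x Hx]; exists x.
      by rewrite Hx set11.
    pose b := [ffun i => xchoose (Hi i)].
    have bP : forall i, b i \in B :&: K i by move=> i; rewrite ffunE; apply: xchooseP.
    rewrite inE; apply/existsP; exists b; apply/andP; split.
      by apply/forallP => i; have := bP i; rewrite inE => /andP[].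
    apply/eqP/setP => x; apply/idP/imsetP.
      move=> xB; have [i xi] := HUK x (HBU B x HB xB); exists i => //.
      apply: (card1_uniq (H1 B HB i)) => //; by rewrite inE xB.
    by move=> [i _ ->]; have := bP i; rewrite inE => /andP[].
  + rewrite inE => /existsP [b /andP [/forallP bK /eqP HBS]].
    set S := [set b i | i : 'I_t] in HBS *.
    suff : S \in bases by rewrite HBS.
    have SK : forall i x, x \in S -> x \in K i -> x = b i.
      move=> i x /imsetP [j _ ->] xi; by rewrite (Hdisj _ _ _ (bK j) xi).
    have main : forall n B0, B0 \in bases -> #|S :\: B0| < n -> S \in bases.
      elim=> [//|n IH] B0 HB0 Hn.
      have [sub|nsub] := boolP (S \subset B0).
        suff -> : S = B0 by [].
        apply/eqP; rewrite eqEsubset sub /=; apply/subsetP => x xB.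
        have [i xi] := HUK x (HBU B0 x HB0 xB).
        have -> : x = b i.
          apply: (card1_uniq (H1 B0 HB0 i)); rewrite inE ?xB ?xi //.
          by rewrite (subsetP sub) ?imset_f ?bK.
        by rewrite imset_f.
      have [s sS sB0] : exists2 s, s \in S & s \notin B0.
        by move/subsetPn: nsub => [s ? ?]; exists s.
      have [i _ Hs] := imsetP sS; subst s.
      have /eqP/cards1P [c Hc] := H1 B0 HB0 i.
      have cB0 : c \in B0 by have := set11 c; rewrite -Hc inE => /andP[].
      have cK : c \in K i by have := set11 c; rewrite -Hc inE => /andP[].
      have cS : c \notin S.
        apply/negP => cS; have := SK i c cS cK => ce; by rewrite -ce cB0 in sB0.
      have /bigcupP [B' HB' biB'] := HKU i (b i) (bK i).
      have cB' : c \notin B'.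
        apply/negP=> cB'; have := @card1_uniq _ _ c (b i) (H1 B' HB' i).
        rewrite !inE cB' cK biB' bK => /(_ isT isT) ce.
        by rewrite -ce cB0 in sB0.
      have cD : c \in B0 :\: B' by rewrite inE cB' cB0.
      have [y yB' HB''] := Hex B0 B' HB0 HB' c cD.
      have yK : y \in K i.
        have /eqP/cards1P [z Hz] := H1 _ HB'' i.
        have : z \in (y |: (B0 :\ c)) :&: K i by rewrite Hz set11.
        rewrite !inE => /andP [/orP [/eqP -> //|/andP [zc zB]] zK].
        have : z \in B0 :&: K i by rewrite inE zB zK.
        by rewrite Hc inE (negbTE zc).
      have yb : y = b i.
        move: yB'; rewrite inE => /andP [_ yB'].
        apply: (card1_uniq (H1 B' HB' i)); by rewrite inE ?yB' ?yK ?biB' ?bK.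
      subst y.
      apply: (IH _ HB'').
      suff Hp : #|S :\: (b i |: (B0 :\ c))| < #|S :\: B0|.
        by apply: (leq_trans Hp); rewrite -ltnS.
      apply: proper_card.
      apply/properP; split.
        apply/subsetP => x; rewrite !inE => /andP [xn xS]; rewrite xS andbT.
        apply/negP => xB0; move: xn; rewrite negb_or => /andP [_].
        rewrite negb_and negbK xB0 orbF => /eqP xc.
        by rewrite -xc xS in cS.
      by exists (b i); rewrite !inE ?sS ?sB0 // eqxx.
    have [B0 HB0] : exists B0, B0 \in bases by apply/set0Pn.
    exact: (main _ B0 HB0 (ltnSn _)).
- move=> -> B; rewrite inE => /existsP [b /andP [/forallP bK /eqP ->]] i.
  apply/eqP/cards1P; exists (b i); apply/setP => x; rewrite !inE.
  apply/andP/eqP.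
    move=> [/imsetP [j _ ->] xi]; by rewrite (Hdisj _ _ _ (bK j) xi).
  by move=> ->; rewrite imset_f ?bK.
Qed.
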